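(* Let $\triangle$ be an apexed triangle with definer $s$ and let $x\in P$. If there is a point $x'$ on $\pi(s,x)$ with $f_\triangle(x')<d(s,x')$, then $f_\triangle(x)<d(s,x)$.
   Context: $P$ is a simple polygon, $S$ a finite set of sites in $P$, $\pi(x,y)$ the shortest path in $P$ between $x$ and $y$, and $d(x,y)$ its Euclidean length. An apexed triangle is a Euclidean triangle $\triangle\subseteq P$ with corners $a,b,c$, where the apex $a$ is a vertex of $P$, $b,c$ lie on a common edge of $P$, together with a site $s\in S$ (the definer) such that $d(x,s)=\|x-a\|+d(a,s)$ for all $x\in\triangle$. Its function $f_\triangle$ is defined as follows. Let $u_1=(b-a)/\|b-a\|$, $u_2=(c-a)/\|c-a\|$, $R_{in}=\{a+\lambda u_1+\mu u_2:\lambda,\mu\ge0\}$, $L=\{x\notin R_{in}:\langle x-a,u_1\rangle\ge\langle x-a,u_2\rangle\}$, $R=\{x\notin R_{in}:\langle x-a,u_2\rangle>\langle x-a,u_1\rangle\}$, $L_{top}=\{x\in L:\langle x-a,u_1\rangle<0\}$, $R_{top}=\{x\in R:\langle x-a,u_2\rangle<0\}$. For $x\in L$ (resp. $R$) let $\hat x$ be the orthogonal projection of $x$ onto the line through $a$ with direction $u_1$ (resp. $u_2$); for $x\in R_{in}$ let $\hat x=x$. Then $f_\triangle(x)=d(a,s)-\|\hat x-a\|$ for $x\in L_{top}\cup R_{top}$ and $f_\triangle(x)=d(a,s)+\|\hat x-a\|$ otherwise. *)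

(* Defs.v *)
From Stdlib Require Import Reals Lra List Sorted ClassicalEpsilon.
Import ListNotations.
Open Scope R_scope.

Definition pt : Type := (R * R)%type.
Definition padd (p q : pt) : pt := (fst p + fst q, snd p + snd q).
Definition psub (p q : pt) : pt := (fst p - fst q, snd p - snd q).
Definition pscale (k : R) (p : pt) : pt := (k * fst p, k * snd p).
Definition dot (p q : pt) : R := fst p * fst q + snd p * snd q.
Definition norm (p : pt) : R := sqrt (dot p p).
Definition dist (p q : pt) : R := norm (psub p q).

Definition on_seg (e : pt * pt) (x : pt) : Prop :=
  exists t, 0 <= t <= 1 /\ x = padd (fst e) (pscale t (psub (snd e) (fst e))).

(** Polygon given by its cyclic list of vertices V = [v_0; ...; v_{n-1}];
    edge i joins v_i and v_{(i+1) mod n}. *)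
Definition edge (V : list pt) (i : nat) : pt * pt :=
  (nth i V (0,0), nth (S i mod length V) V (0,0)).

Definition on_boundary (V : list pt) (x : pt) : Prop :=
  exists i, (i < length V)%nat /\ on_seg (edge V i) x.

Definition simple_polygon (V : list pt) : Prop :=
  (3 <= length V)%nat /\ NoDup V /\
  forall i j x, (i < j)%nat -> (j < length V)%nat ->
    on_seg (edge V i) x -> on_seg (edge V j) x ->
    (j = S i /\ x = nth j V (0,0)) \/
    (i = 0%nat /\ j = pred (length V) /\ x = nth 0 V (0,0)).

Definition continuous_on01 (g : R -> pt) : Prop :=
  forall t, 0 <= t <= 1 -> forall eps, eps > 0 ->
    exists del, del > 0 /\ forall t', 0 <= t' <= 1 -> Rabs (t' - t) < del ->
      dist (g t') (g t) < eps.

Definition maxnorm (V : list pt) : R := fold_right (fun p m => Rmax (norm p) m) 0 V.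

(** The closed region P bounded by the polygon (boundary together with the
    bounded component of its complement): the points that cannot be joined to a
    point outside the disk containing all vertices without meeting the boundary. *)
Definition polygon_region (V : list pt) (x : pt) : Prop :=
  forall g, continuous_on01 g -> g 0 = x -> norm (g 1) > maxnorm V ->
    exists t, 0 <= t <= 1 /\ on_boundary V (g t).

Fixpoint chord_sum (g : R -> pt) (l : list R) : R :=
  match l with
  | t1 :: ((t2 :: _) as tl) => dist (g t1) (g t2) + chord_sum g tl
  | _ => 0
  end.

Definition chord_sums (g : R -> pt) (r : R) : Prop :=
  exists l, Sorted Rle l /\ Forall (fun t => 0 <= t <= 1) l /\
            r = chord_sum g (0 :: l ++ [1]).

Definition has_length (g : R -> pt) (L : R) : Prop := is_lub (chord_sums g) L.

Definition path_in (P : pt -> Prop) (g : R -> pt) (x y : pt) : Prop :=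
  continuous_on01 g /\ g 0 = x /\ g 1 = y /\ forall t, 0 <= t <= 1 -> P (g t).

Definition path_lengths (P : pt -> Prop) (x y : pt) (L : R) : Prop :=
  exists g, path_in P g x y /\ has_length g L.

Definition is_glb (E : R -> Prop) (m : R) : Prop :=
  (forall r, E r -> m <= r) /\ (forall m', (forall r, E r -> m' <= r) -> m' <= m).

Definition geodist (P : pt -> Prop) (x y : pt) : R :=
  epsilon (inhabits 0) (fun m => is_glb (path_lengths P x y) m).

(** z lies on the (unique) shortest path pi(x,y) in P. *)
Definition on_shortest_path (P : pt -> Prop) (x y z : pt) : Prop :=
  exists g, path_in P g x y /\ has_length g (geodist P x y) /\
            exists t, 0 <= t <= 1 /\ g t = z.

Definition in_triangle (a b c x : pt) : Prop :=
  exists al be ga, 0 <= al /\ 0 <= be /\ 0 <= ga /\ al + be + ga = 1 /\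
    x = padd (pscale al a) (padd (pscale be b) (pscale ga c)).

Definition apexed_triangle (V S : list pt) (a b c s : pt) : Prop :=
  In a V /\
  (exists i, (i < length V)%nat /\ on_seg (edge V i) b /\ on_seg (edge V i) c) /\
  b <> a /\ c <> a /\
  (forall x, in_triangle a b c x -> polygon_region V x) /\
  In s S /\
  forall x, in_triangle a b c x ->
    geodist (polygon_region V) x s = dist x a + geodist (polygon_region V) a s.

Definition unit_dir (a b : pt) : pt := pscale (/ norm (psub b a)) (psub b a).

Definition R_in (a b c x : pt) : Prop :=
  exists la mu, 0 <= la /\ 0 <= mu /\
    x = padd a (padd (pscale la (unit_dir a b)) (pscale mu (unit_dir a c))).

Definition in_L (a b c x : pt) : Prop :=
  ~ R_in a b c x /\ dot (psub x a) (unit_dir a b) >= dot (psub x a) (unit_dir a c).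
Definition in_R (a b c x : pt) : Prop :=
  ~ R_in a b c x /\ dot (psub x a) (unit_dir a c) > dot (psub x a) (unit_dir a b).
Definition in_Ltop (a b c x : pt) : Prop :=
  in_L a b c x /\ dot (psub x a) (unit_dir a b) < 0.
Definition in_Rtop (a b c x : pt) : Prop :=
  in_R a b c x /\ dot (psub x a) (unit_dir a c) < 0.

Definition proj_line (a u x : pt) : pt := padd a (pscale (dot (psub x a) u) u).

Definition xhat (a b c x : pt) : pt :=
  if excluded_middle_informative (R_in a b c x) then x
  else if excluded_middle_informative (in_L a b c x) then proj_line a (unit_dir a b) x
  else proj_line a (unit_dir a c) x.

Definition f_tri (V : list pt) (a b c s x : pt) : R :=
  if excluded_middle_informative (in_Ltop a b c x \/ in_Rtop a b c x)
  then geodist (polygon_region V) a s - norm (psub (xhat a b c x) a)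
  else geodist (polygon_region V) a s + norm (psub (xhat a b c x) a).

(* Main.v *)
Require Import Defs.
From Stdlib Require Import Reals List.
From Stdlib Require Import Lra Psatz Sorted ClassicalEpsilon.
Import ListNotations.
Open Scope R_scope.
Lemma core_ab (al be k la mu : R) : -1 < k < 1 -> 0 <= la -> 0 <= mu ->
  la*la + mu*mu + 2*k*la*mu = 1 -> (al < 0 \/ be < 0) ->
  la*(al+be*k)+mu*(al*k+be) <= al+be*k \/ la*(al+be*k)+mu*(al*k+be) <= al*k+be.
Proof.
  intros Hk Hla Hmu Hu Hab.
  set (P := la + mu*k). set (Q := la*k + mu).
  assert (HP2 : P*P = 1 - mu*mu*(1-k*k)) by (unfold P; nra).
  assert (HQ2 : Q*Q = 1 - la*la*(1-k*k)) by (unfold Q; nra).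
  assert (HPQ : P - k*Q = la*(1-k*k)) by (unfold P, Q; ring).
  assert (HQP : Q - k*P = mu*(1-k*k)) by (unfold P, Q; ring).
  assert (Hk2 : 0 < 1 - k*k) by nra.
  assert (Q1 : Q <= 1).
  { assert (Q*Q <= 1) by (rewrite HQ2; assert (0 <= la*la*(1-k*k)) by (apply Rmult_le_pos; nra); lra). nra. }
  assert (P1 : P <= 1).
  { assert (P*P <= 1) by (rewrite HP2; assert (0 <= mu*mu*(1-k*k)) by (apply Rmult_le_pos; nra); lra). nra. }
  assert (Pk : P >= k).
  { destruct (Rle_lt_dec k 0).
    - assert (0 <= k*(Q-1)) by nra. assert (0 <= la*(1-k*k)) by nra. nra.
    - assert (0 <= k*la*mu) by (repeat apply Rmult_le_pos; lra). assert (mu*mu <= 1) by nra. assert (mu <= 1) by nra. assert (0 <= P) by (unfold P; nra).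
      assert (k*k <= P*P) by (rewrite HP2; nra). nra. }
  assert (Qk : Q >= k).
  { destruct (Rle_lt_dec k 0).
    - assert (0 <= k*(P-1)) by nra. assert (0 <= mu*(1-k*k)) by nra. nra.
    - assert (0 <= k*la*mu) by (repeat apply Rmult_le_pos; lra). assert (la*la <= 1) by nra. assert (la <= 1) by nra. assert (0 <= Q) by (unfold Q; nra).
      assert (k*k <= Q*Q) by (rewrite HQ2; nra). nra. }
  assert (S1 : la + mu >= 1).
  { assert (0 <= la*mu*(1-k)) by (repeat apply Rmult_le_pos; lra).
    assert ((la+mu)*(la+mu) >= 1) by nra. nra. }
  assert (E : la*(al+be*k)+mu*(al*k+be) = al*P + be*Q) by (unfold P, Q; ring).
  rewrite E.
  destruct (Rlt_or_le al 0) as [Ha|Ha]; destruct (Rlt_or_le be 0) as [Hb|Hb].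
  - destruct (Rle_or_lt (al*P+be*Q) (al+be*k)) as [H|H]; [now left|].
    destruct (Rle_or_lt (al*P+be*Q) (al*k+be)) as [H'|H']; [now right|].
    exfalso.
    assert (X1 : (-al)*(1-P) > (-be)*(Q-k)) by lra.
    assert (X2 : (-be)*(1-Q) > (-al)*(P-k)) by lra.
    assert (Y1 : 0 <= (-be)*(Q-k)) by nra.
    assert (Y2 : 0 <= (-al)*(P-k)) by nra.
    assert (Z : (-al)*(1-P)*((-be)*(1-Q)) > (-be)*(Q-k)*((-al)*(P-k))) by nra.
    assert (Z2 : (1-P)*(1-Q) > (Q-k)*(P-k)).
    { assert (0 < (-al)*(-be)) by nra.
      apply (Rmult_lt_reg_l ((-al)*(-be))); nra. }
    assert (P + Q >= 1 + k) by (unfold P, Q; nra).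
    nra.
  - right. nra.
  - left. nra.
  - lra.
Qed.
Lemma dot_ge0 p : 0 <= dot p p.
Proof. destruct p; unfold dot; simpl; nra. Qed.
Lemma norm_ge0 p : 0 <= norm p.
Proof. unfold norm; apply sqrt_pos. Qed.
Lemma norm_sq p : norm p * norm p = dot p p.
Proof. unfold norm; apply sqrt_sqrt, dot_ge0. Qed.

Lemma cs_both p q : - (norm p * norm q) <= dot p q <= norm p * norm q.
Proof.
  assert (H : dot p q * dot p q <= (norm p * norm q) * (norm p * norm q)).
  { replace ((norm p * norm q) * (norm p * norm q)) with ((norm p * norm p) * (norm q * norm q)) by ring.
    rewrite !norm_sq. destruct p as [p1 p2], q as [q1 q2]; unfold dot; simpl.
    assert (0 <= (p1*q2-p2*q1)*(p1*q2-p2*q1)) by (apply Rle_0_sqr).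
    assert (E: (p1*p1+p2*p2)*(q1*q1+q2*q2) - (p1*q1+p2*q2)*(p1*q1+p2*q2) = (p1*q2-p2*q1)*(p1*q2-p2*q1)) by ring.
    lra. }
  assert (0 <= norm p * norm q) by (apply Rmult_le_pos; apply norm_ge0).
  split; nra.
Qed.

Lemma norm_triangle p q : norm (padd p q) <= norm p + norm q.
Proof.
  assert (H : norm (padd p q) * norm (padd p q) <= (norm p + norm q) * (norm p + norm q)).
  { rewrite norm_sq.
    replace ((norm p + norm q) * (norm p + norm q)) with (norm p * norm p + 2 * (norm p * norm q) + norm q * norm q) by ring.
    rewrite !norm_sq. destruct (cs_both p q).
    replace (dot (padd p q) (padd p q)) with (dot p p + 2 * dot p q + dot q q)
      by (destruct p, q; unfold dot, padd; simpl; ring). lra. }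
  pose proof (norm_ge0 (padd p q)). pose proof (norm_ge0 p). pose proof (norm_ge0 q).
  nra.
Qed.

Lemma norm_opp p : norm (pscale (-1) p) = norm p.
Proof. unfold norm; f_equal; destruct p; unfold dot, pscale; simpl; ring. Qed.

Lemma unit_norm1 a b : b <> a -> dot (unit_dir a b) (unit_dir a b) = 1.
Proof.
  intro Hab. unfold unit_dir.
  assert (Hpos : 0 < dot (psub b a) (psub b a)).
  { destruct a as [a1 a2], b as [b1 b2]; unfold dot, psub; simpl.
    destruct (Req_dec (b1 - a1) 0); destruct (Req_dec (b2 - a2) 0).
    - exfalso; apply Hab; f_equal; lra.
    - nra. - nra. - nra. }
  assert (Hn : norm (psub b a) * norm (psub b a) = dot (psub b a) (psub b a)) by apply norm_sq.
  assert (Hnz : norm (psub b a) <> 0) by (intro E; rewrite E in Hn; lra).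
  replace (dot (pscale (/ norm (psub b a)) (psub b a)) (pscale (/ norm (psub b a)) (psub b a)))
    with ((/ norm (psub b a)) * (/ norm (psub b a)) * dot (psub b a) (psub b a))
    by (destruct (psub b a); unfold dot, pscale; simpl; ring).
  rewrite <- Hn. field. exact Hnz.
Qed.

Lemma norm1 u : dot u u = 1 -> norm u = 1.
Proof. intro H; unfold norm; rewrite H; apply sqrt_1. Qed.

Lemma norm_proj a u x : dot u u = 1 ->
  norm (psub (proj_line a u x) a) = Rabs (dot (psub x a) u).
Proof.
  intro Hu. unfold norm, proj_line.
  set (d := dot (psub x a) u).
  replace (dot (psub (padd a (pscale d u)) a) (psub (padd a (pscale d u)) a))
    with (d * d * dot u u) by (destruct a, u; unfold dot, psub, padd, pscale; simpl; ring).
  rewrite Hu, Rmult_1_r. apply sqrt_Rsqr_abs.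
Qed.

Lemma dot_diff_le a y z u : dot u u = 1 ->
  dot (psub y a) u - dot (psub z a) u <= norm (psub z y).
Proof.
  intro Hu. replace (dot (psub y a) u - dot (psub z a) u) with (- dot (psub z y) u)
    by (destruct a, y, z, u; unfold dot, psub; simpl; ring).
  destruct (cs_both (psub z y) u) as [H _]. rewrite (norm1 u Hu), Rmult_1_r in H. lra.
Qed.

Lemma norm_diff_le a y z : norm (psub y a) <= norm (psub z a) + norm (psub z y).
Proof.
  replace (psub y a) with (padd (psub z a) (pscale (-1) (psub z y)))
    by (destruct a, y, z; unfold padd, psub, pscale; simpl; f_equal; ring).
  rewrite <- (norm_opp (psub z y)). apply norm_triangle.
Qed.
Lemma core_coord u1 u2 v la mu : dot u1 u1 = 1 -> dot u2 u2 = 1 -> 0 <= la -> 0 <= mu ->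
  dot (padd (pscale la u1) (pscale mu u2)) (padd (pscale la u1) (pscale mu u2)) = 1 ->
  dot v (padd (pscale la u1) (pscale mu u2)) <= dot v u1 \/
  dot v (padd (pscale la u1) (pscale mu u2)) <= dot v u2 \/
  exists al be, 0 <= al /\ 0 <= be /\ v = padd (pscale al u1) (pscale be u2).
Proof.
  destruct u1 as [p1 q1], u2 as [p2 q2], v as [v1 v2]; unfold dot, padd, pscale; simpl.
  intros H1 H2 Hla Hmu Hu.
  set (k := p1*p2+q1*q2). set (D := p1*q2 - q1*p2).
  assert (HD : D*D + k*k = 1).
  { unfold D, k. replace 1 with ((p1*p1+q1*q1)*(p2*p2+q2*q2)) by (rewrite H1, H2; ring). ring. }
  assert (Eu : v1*(la*p1+mu*p2) + v2*(la*q1+mu*q2) = la*(v1*p1+v2*q1) + mu*(v1*p2+v2*q2)) by ring.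
  assert (Hun : la*la + mu*mu + 2*k*la*mu = 1).
  { rewrite <- Hu. unfold k.
    replace (la*la + mu*mu + 2*(p1*p2+q1*q2)*la*mu) with
      (la*la*(p1*p1+q1*q1) + mu*mu*(p2*p2+q2*q2) + 2*(p1*p2+q1*q2)*la*mu) by (rewrite H1, H2; ring).
    ring. }
  destruct (Req_dec D 0) as [HD0|HD0].
  - assert (Hk2 : k*k = 1) by (rewrite HD0 in HD; lra).
    assert (Hsq : (p2 - k*p1)*(p2 - k*p1) + (q2 - k*q1)*(q2 - k*q1) = 0).
    { replace ((p2 - k*p1)*(p2 - k*p1) + (q2 - k*q1)*(q2 - k*q1)) with
        ((p2*p2+q2*q2) - 2*k*(p1*p2+q1*q2) + k*k*(p1*p1+q1*q1)) by ring.
      rewrite H1, H2. fold k. nra. }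
    assert (E1 : 0 <= (p2 - k*p1)*(p2 - k*p1)) by apply Rle_0_sqr.
    assert (E2 : 0 <= (q2 - k*q1)*(q2 - k*q1)) by apply Rle_0_sqr.
    assert (Hp2 : p2 = k*p1).
    { assert ((p2 - k*p1)*(p2 - k*p1) = 0) by lra. apply Rmult_integral in H. lra. }
    assert (Hq2 : q2 = k*q1).
    { assert ((q2 - k*q1)*(q2 - k*q1) = 0) by lra. apply Rmult_integral in H. lra. }
    rewrite Eu. rewrite Hp2, Hq2.
    set (A := v1*p1+v2*q1).
    replace (v1*(k*p1)+v2*(k*q1)) with (k*A) by (unfold A; ring).
    assert (Hc : (la + mu*k)*(la+mu*k) = 1) by nra.
    destruct (Req_dec (la+mu*k) 1) as [Hc1|Hc1].
    + left. replace (la*A + mu*(k*A)) with ((la+mu*k)*A) by ring. rewrite Hc1; lra.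
    + assert (Hcm : la + mu*k = -1).
      { assert ((la+mu*k - 1)*(la+mu*k+1) = 0) by nra. apply Rmult_integral in H. lra. }
      assert (Hkm : k = -1).
      { destruct (Rlt_or_le k 0). nra. nra. }
      right; left. replace (la*A + mu*(k*A)) with ((la+mu*k)*A) by ring. rewrite Hcm, Hkm. lra.
  - assert (Hex : exists al be, v1 = al*p1+be*p2 /\ v2 = al*q1+be*q2).
    { exists ((v1*q2 - v2*p2)/D), ((p1*v2 - q1*v1)/D). unfold D in *. split; field; exact HD0. }
    destruct Hex as [al [be [Hv1 Hv2]]].
    assert (EA : v1*p1+v2*q1 = al + be*k).
    { rewrite Hv1, Hv2. unfold k.
      replace ((al*p1+be*p2)*p1 + (al*q1+be*q2)*q1) with (al*(p1*p1+q1*q1) + be*(p1*p2+q1*q2)) by ring.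
      rewrite H1; ring. }
    assert (EB : v1*p2+v2*q2 = al*k + be).
    { rewrite Hv1, Hv2. unfold k.
      replace ((al*p1+be*p2)*p2 + (al*q1+be*q2)*q2) with (al*(p1*p2+q1*q2) + be*(p2*p2+q2*q2)) by ring.
      rewrite H2; ring. }
    destruct (Rlt_or_le al 0) as [Ha|Ha]; [|destruct (Rlt_or_le be 0) as [Hb|Hb]].
    + assert (Hk : -1 < k < 1) by (assert (0 < D*D) by (apply Rsqr_pos_lt; exact HD0); nra).
      destruct (core_ab al be k la mu Hk Hla Hmu Hun (or_introl Ha)) as [H|H].
      * left. rewrite Eu, EA, EB. lra.
      * right; left. rewrite Eu, EA, EB. lra.
    + assert (Hk : -1 < k < 1) by (assert (0 < D*D) by (apply Rsqr_pos_lt; exact HD0); nra).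
      destruct (core_ab al be k la mu Hk Hla Hmu Hun (or_intror Hb)) as [H|H].
      * left. rewrite Eu, EA, EB. lra.
      * right; left. rewrite Eu, EA, EB. lra.
    + right; right. exists al, be. split; [lra|split; [lra|]]. rewrite Hv1, Hv2. reflexivity.
Qed.

Lemma norm_sym y z : norm (psub y z) = norm (psub z y).
Proof. rewrite <- norm_opp. f_equal. destruct y, z; unfold pscale, psub; simpl; f_equal; ring. Qed.

Section F.
Variables (V : list pt) (a b c s : pt).
Hypothesis Hb : b <> a.
Hypothesis Hc : c <> a.
Let u1 := unit_dir a b.
Let u2 := unit_dir a c.
Let D := geodist (polygon_region V) a s.

Lemma f_spec x :
  (R_in a b c x /\ f_tri V a b c s x = D + norm (psub x a)) \/
  (~ R_in a b c x /\ f_tri V a b c s x = D + dot (psub x a) u1 /\ dot (psub x a) u2 <= dot (psub x a) u1) \/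
  (~ R_in a b c x /\ f_tri V a b c s x = D + dot (psub x a) u2 /\ dot (psub x a) u1 <= dot (psub x a) u2).
Proof.
  pose proof (unit_norm1 a b Hb) as U1. pose proof (unit_norm1 a c Hc) as U2.
  unfold f_tri, xhat. fold D.
  destruct (excluded_middle_informative (R_in a b c x)) as [Hin|Hin].
  - left. split; [exact Hin|].
    destruct (excluded_middle_informative (in_Ltop a b c x \/ in_Rtop a b c x)) as [[[[HH _] _]|[[HH _] _]]|_];
      try contradiction; reflexivity.
  - destruct (excluded_middle_informative (in_L a b c x)) as [HL|HL].
    + right; left. destruct HL as [_ HL]. split; [exact Hin|]. split; [|fold u1 u2 in HL; lra].
      rewrite norm_proj by exact U1.
      destruct (excluded_middle_informative (in_Ltop a b c x \/ in_Rtop a b c x)) as [[HLt|HRt]|HN].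
      * destruct HLt as [_ Hneg]. rewrite Rabs_left by exact Hneg. fold u1. lra.
      * destruct HRt as [[_ HR] _]. fold u1 u2 in HR, HL. lra.
      * rewrite Rabs_right. reflexivity.
        destruct (Rlt_or_le (dot (psub x a) (unit_dir a b)) 0) as [Hl|Hl]; [|lra].
        exfalso. apply HN. left. split; [split; [exact Hin|exact HL]|exact Hl].
    + right; right.
      assert (HR : dot (psub x a) (unit_dir a c) > dot (psub x a) (unit_dir a b)).
      { destruct (Rlt_or_le (dot (psub x a) (unit_dir a b)) (dot (psub x a) (unit_dir a c))) as [h|h]; [lra|].
        exfalso; apply HL; split; [exact Hin|lra]. }
      split; [exact Hin|]. split; [|fold u1 u2 in HR; lra].
      rewrite norm_proj by exact U2.
      destruct (excluded_middle_informative (in_Ltop a b c x \/ in_Rtop a b c x)) as [[HLt|HRt]|HN].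
      * destruct HLt as [HL0 _]. contradiction.
      * destruct HRt as [_ Hneg]. rewrite Rabs_left by exact Hneg. fold u2. lra.
      * rewrite Rabs_right. reflexivity.
        destruct (Rlt_or_le (dot (psub x a) (unit_dir a c)) 0) as [Hl|Hl]; [|lra].
        exfalso. apply HN. right. split; [split; [exact Hin|exact HR]|exact Hl].
Qed.

Lemma f_lower x : D + dot (psub x a) u1 <= f_tri V a b c s x /\ D + dot (psub x a) u2 <= f_tri V a b c s x.
Proof.
  pose proof (unit_norm1 a b Hb) as U1. pose proof (unit_norm1 a c Hc) as U2.
  destruct (f_spec x) as [[_ E]|[[_ [E H]]|[_ [E H]]]]; rewrite E; try lra.
  destruct (cs_both (psub x a) u1) as [_ C1]. destruct (cs_both (psub x a) u2) as [_ C2].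
  unfold u1, u2 in *. rewrite (norm1 _ U1) in C1. rewrite (norm1 _ U2) in C2. lra.
Qed.

Lemma f_lip y z : f_tri V a b c s y <= f_tri V a b c s z + norm (psub z y).
Proof.
  pose proof (unit_norm1 a b Hb) as U1. pose proof (unit_norm1 a c Hc) as U2.
  fold u1 in U1. fold u2 in U2.
  destruct (f_lower z) as [L1 L2].
  destruct (f_spec y) as [[Hy Ey]|[[_ [Ey _]]|[_ [Ey _]]]]; rewrite Ey.
  2: { pose proof (dot_diff_le a y z u1 U1). lra. }
  2: { pose proof (dot_diff_le a y z u2 U2). lra. }
  destruct Hy as [la [mu [Hla [Hmu Hyeq]]]]. fold u1 u2 in Hyeq.
  set (w := psub y a).
  assert (Hw : w = padd (pscale la u1) (pscale mu u2)).
  { unfold w. rewrite Hyeq. destruct a, u1, u2; unfold psub, padd, pscale; simpl; f_equal; ring. }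
  destruct (f_spec z) as [[_ Ez]|[[Hz [Ez Hz2]]|[Hz [Ez Hz2]]]].
  { rewrite Ez. pose proof (norm_diff_le a y z). fold w in H. lra. }
  all: rewrite Ez.
  all: destruct (Req_dec (norm w) 0) as [Hn0|Hn0];
    [ pose proof (norm_diff_le a z y) as T; rewrite (norm_sym y z) in T; fold w in T;
      destruct (cs_both (psub z a) u1) as [C1 _]; destruct (cs_both (psub z a) u2) as [C2 _];
      rewrite (norm1 _ U1) in C1; rewrite (norm1 _ U2) in C2; lra | ].
  all: set (n := norm w); assert (Hnp : 0 < n) by (pose proof (norm_ge0 w); unfold n in *; lra);
    set (u := pscale (/ n) w);
    assert (Hu : u = padd (pscale (la/n) u1) (pscale (mu/n) u2))
      by (unfold u; rewrite Hw; destruct u1, u2; unfold pscale, padd; simpl; f_equal; field; lra);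
    assert (Huu : dot u u = 1)
      by (unfold u; replace (dot (pscale (/ n) w) (pscale (/ n) w)) with (/n * /n * dot w w)
            by (destruct w; unfold dot, pscale; simpl; ring);
          rewrite <- (norm_sq w); fold n; field; lra);
    assert (Hwu : dot w u = n)
      by (unfold u; replace (dot w (pscale (/ n) w)) with (/n * dot w w)
            by (destruct w; unfold dot, pscale; simpl; ring);
          rewrite <- (norm_sq w); fold n; field; lra);
    pose proof (dot_diff_le a y z u Huu) as DD; fold w in DD;
    assert (Hla' : 0 <= la/n) by (unfold Rdiv; apply Rmult_le_pos; [lra|apply Rlt_le, Rinv_0_lt_compat; lra]);
    assert (Hmu' : 0 <= mu/n) by (unfold Rdiv; apply Rmult_le_pos; [lra|apply Rlt_le, Rinv_0_lt_compat; lra]);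
    rewrite Hu in Huu;
    destruct (core_coord u1 u2 (psub z a) (la/n) (mu/n) U1 U2 Hla' Hmu' Huu) as [K|[K|K]];
    try rewrite <- Hu in K;
    [ lra | lra |
      exfalso; apply Hz; destruct K as [al [be [Hal [Hbe Kv]]]]; exists al, be;
      split; [exact Hal|]; split; [exact Hbe|];
      fold u1 u2; rewrite <- Kv; destruct z, a; unfold psub, padd; simpl; f_equal; ring ].
Qed.
End F.
Lemma chord_app g l1 y l2 :
  chord_sum g (l1 ++ y :: l2) = chord_sum g (l1 ++ [y]) + chord_sum g (y :: l2).
Proof.
  induction l1 as [|a0 l1 IH]; [simpl; ring|].
  destruct l1 as [|b0 l1]; simpl; [ring|].
  simpl in IH. rewrite IH. ring.
Qed.

Lemma chord_scale g t l a0 :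
  chord_sum (fun u => g (t*u)) (a0 :: l) = chord_sum g (t*a0 :: map (fun u => t*u) l).
Proof.
  revert a0; induction l as [|b0 l IH]; intro a0; [reflexivity|].
  change (chord_sum (fun u => g (t*u)) (a0 :: b0 :: l)) with
    (Defs.dist (g (t*a0)) (g (t*b0)) + chord_sum (fun u => g (t*u)) (b0 :: l)).
  rewrite IH. reflexivity.
Qed.

Lemma sorted_scale t l : 0 <= t <= 1 -> Sorted Rle l -> Forall (fun u => 0 <= u <= 1) l ->
  Sorted Rle (map (fun u => t*u) l ++ [t]).
Proof.
  intros Ht Hs Hf.
  apply StronglySorted_Sorted.
  apply Sorted_StronglySorted in Hs; [|intros x y z; apply Rle_trans].
  induction l as [|a0 l IH]; simpl.
  - constructor; constructor.
  - inversion Hs; subst. inversion Hf; subst.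
    constructor; [apply IH; assumption|].
    apply Forall_app; split.
    + apply Forall_map. eapply Forall_impl; [|exact H2]. intros x Hx; simpl. nra.
    + constructor; [simpl; nra|constructor].
Qed.

Lemma forall_scale t l : 0 <= t <= 1 -> Forall (fun u => 0 <= u <= 1) l ->
  Forall (fun u => 0 <= u <= 1) (map (fun u => t*u) l ++ [t]).
Proof.
  intros Ht Hf. apply Forall_app; split.
  - apply Forall_map. eapply Forall_impl; [|exact Hf]. intros x Hx; simpl. nra.
  - constructor; [lra|constructor].
Qed.

Lemma glb_exists (E : R -> Prop) : (exists r, E r) -> (forall r, E r -> 0 <= r) -> exists m, is_glb E m.
Proof.
  intros [r0 Hr0] Hpos.
  destruct (completeness (fun y => E (- y))) as [m [Hub Hlub]].
  - exists 0. intros y Hy. specialize (Hpos _ Hy). lra.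
  - exists (- r0). rewrite Ropp_involutive. exact Hr0.
  - exists (- m). split.
    + intros r Hr. assert (- r <= m) by (apply Hub; rewrite Ropp_involutive; exact Hr). lra.
    + intros m' Hm'. assert (m <= - m').
      { apply Hlub. intros y Hy. specialize (Hm' _ Hy). lra. }
      lra.
Qed.

Lemma length_nonneg g L : has_length g L -> 0 <= L.
Proof.
  intros [Hub _]. apply Rle_trans with (chord_sum g (0 :: [] ++ [1])).
  - simpl. rewrite Rplus_0_r. unfold Defs.dist. apply norm_ge0.
  - apply Hub. exists []. split; [constructor|]. split; [constructor|reflexivity].
Qed.

Lemma geodist_le P x y L : path_lengths P x y L -> geodist P x y <= L.
Proof.
  intro HL. unfold geodist.
  assert (Hex : exists m, is_glb (path_lengths P x y) m).
  { apply glb_exists. exists L; exact HL.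
    intros r [g [_ Hg]]. eapply length_nonneg; eauto. }
  pose proof (epsilon_spec (inhabits 0) _ Hex) as [H _]. apply H. exact HL.
Qed.

Lemma subpath_bound P g s x L t :
  path_in P g s x -> has_length g L -> 0 <= t <= 1 ->
  geodist P s (g t) <= L - Defs.dist (g t) x.
Proof.
  intros [Hc [H0 [H1 HP]]] [Hub _] Ht.
  set (h := fun u => g (t*u)).
  assert (Hbound : forall r, chord_sums h r -> r <= L - Defs.dist (g t) x).
  { intros r [l [Hs [Hf Hr]]]. subst r.
    unfold h. rewrite chord_scale, map_app. simpl map.
    rewrite Rmult_0_r, Rmult_1_r.
    assert (Hle : chord_sum g (0 :: (map (fun u => t*u) l ++ [t]) ++ [1]) <= L).
    { apply Hub. exists (map (fun u => t*u) l ++ [t]). split; [apply sorted_scale; auto|].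
      split; [apply forall_scale; auto|reflexivity]. }
    replace (0 :: (map (fun u => t*u) l ++ [t]) ++ [1]) with ((0 :: map (fun u => t*u) l) ++ t :: [1]) in Hle
      by (simpl; rewrite <- app_assoc; reflexivity).
    rewrite chord_app in Hle. change (chord_sum g [t;1]) with (Defs.dist (g t) (g 1) + 0) in Hle. cbn [app] in Hle. rewrite H1 in Hle. lra. }
  destruct (completeness (chord_sums h)) as [L1 HL1].
  - exists (L - Defs.dist (g t) x). exact Hbound.
  - exists (chord_sum h (0 :: [] ++ [1])). exists []. split; [constructor|]. split; [constructor|reflexivity].
  - apply Rle_trans with L1.
    + apply geodist_le. exists h. split; [|exact HL1].
      split; [|split; [|split]].
      * intros u Hu eps Heps.
        assert (Htu : 0 <= t*u <= 1) by nra.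
        destruct (Hc (t*u) Htu eps Heps) as [del [Hdel Hd]].
        exists (del / (t+1)). split; [apply Rdiv_lt_0_compat; lra|].
        intros u' Hu' Hdu. unfold h. apply Hd; [nra|].
        rewrite <- Rmult_minus_distr_l, Rabs_mult, (Rabs_pos_eq t) by lra.
        assert (Hdu' : Rabs (u' - u) * (t+1) < del).
        { apply (Rmult_lt_compat_r (t+1)) in Hdu; [|lra].
          unfold Rdiv in Hdu. rewrite Rmult_assoc, Rinv_l, Rmult_1_r in Hdu by lra. exact Hdu. }
        pose proof (Rabs_pos (u'-u)). nra.
      * unfold h. rewrite Rmult_0_r. exact H0.
      * unfold h. rewrite Rmult_1_r. reflexivity.
      * intros u Hu. unfold h. apply HP. nra.
    + destruct HL1 as [_ Hl]. apply Hl. exact Hbound.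
Qed.

Theorem mainTheorem9 (V S : list pt) (a b c s x x' : pt) :
  simple_polygon V ->
  (forall q, In q S -> polygon_region V q) ->
  apexed_triangle V S a b c s ->
  polygon_region V x ->
  on_shortest_path (polygon_region V) s x x' ->
  f_tri V a b c s x' < geodist (polygon_region V) s x' ->
  f_tri V a b c s x < geodist (polygon_region V) s x.
Proof.
  intros _ _ Hat _ Hsp Hf.
  destruct Hat as [_ [_ [Hb [Hc _]]]].
  destruct Hsp as [g [Hpath [Hlen [t [Ht Hgt]]]]]. subst x'.
  pose proof (subpath_bound _ g s x _ t Hpath Hlen Ht) as H1.
  pose proof (f_lip V a b c s Hb Hc x (g t)) as H2.
  unfold Defs.dist in H1. lra.
Qed.
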